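(* Let $n>1$ be an integer and $S=S_1\cup S_2\subseteq U_{6n}$ with $S_1=\langle a^2\rangle\setminus\{1\}$ and $S_2=\{a^{2r+1},\ a^{2r+1}b\mid 0\le r\le n-1\}$. Then $\mathrm{Cay}(U_{6n},S)$ is a connected integral graph whose spectrum (eigenvalues with multiplicities) is $\{[-n-1]^1,[-1]^{6n-4},[2n-1]^2,[3n-1]^1\}$.
   Context: For an integer $n\ge1$, $U_{6n}=\langle a,b\mid a^{2n}=b^3=1,\ a^{-1}ba=b^{-1}\rangle$, a group of order $6n$. For a group $G$ and $S\subseteq G$ with $1\notin S=S^{-1}$, the Cayley graph $\mathrm{Cay}(G,S)$ has vertex set $G$ and edges $\{g,sg\}$ for $g\in G,s\in S$. A graph is integral if all eigenvalues of its adjacency matrix are integers. $[\lambda]^m$ denotes eigenvalue $\lambda$ with multiplicity $m$. *)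

(* Defs.v *)
From mathcomp Require Import all_boot all_order all_algebra all_fingroup all_field.
Set Implicit Arguments. Unset Strict Implicit. Unset Printing Implicit Defensive.
Import GRing.Theory Num.Theory.
Local Open Scope ring_scope.

Definition cay_rel (gT : finGroupType) (S : {set gT}) : rel gT :=
  fun g h => (h * g^-1)%g \in S.

Definition cay_adj (gT : finGroupType) (S : {set gT}) : 'M[algC]_#|gT| :=
  \matrix_(i, j) ((cay_rel S (enum_val i) (enum_val j) : bool)%:R).

Definition cay_connected (gT : finGroupType) (S : {set gT}) : Prop :=
  forall g h : gT, connect (cay_rel S) g h.

Definition integral_mx (m : nat) (A : 'M[algC]_m) : Prop :=
  forall l : algC, eigenvalue A l -> l \is a Num.int.

(* Main.v *)
Require Import Defs.
From mathcomp Require Import all_boot all_order all_algebra all_fingroup all_field.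
From mathcomp Require Import ring zify.
Import GRing.Theory Num.Theory.
Set Implicit Arguments. Unset Strict Implicit. Unset Printing Implicit Defensive.
Local Open Scope group_scope.
Definition Mb (i j : 'I_6) : bool := (((j + 6 - i) %% 6)%N \in [:: 0;1;5]%N).
Definition posn (p : bool) (j : nat) : nat := (if p then (2*j+5) %% 6 else (2*j) %% 6)%N.
Lemma posn_lt p j : (posn p j < 6)%N. Proof. by rewrite /posn; case: p; apply: ltn_pmod. Qed.
Definition pos (p : bool) (j : nat) : 'I_6 := Ordinal (posn_lt p j).
Lemma fcheck (om oi mz : bool) (e j : nat) : (e < 3)%N -> (j < 3)%N -> (mz -> ~~ om) ->
  (((e == 0%N) && ~~ mz) || ((e == 1%N) && om)) =
  Mb (pos oi j) (pos (om (+) oi) ((e * (if oi then 2 else 1)%N + j) %% 3)) && ~~ (mz && (e == 0%N)).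
Proof.
move=> he hj; case: e he => [|[|[|e]]] // _; case: j hj => [|[|[|j]]] // _;
 by case: om; case: oi; case: mz => //= /(_ isT).
Qed.
Lemma inner (p : bool) (c : 'I_6) : (\sum_(j < 3) (pos p j == c))%N = (p == odd c).
Proof.
rewrite !big_ord_recl big_ord0; case: p; case: c => -[|[|[|[|[|[|c]]]]]] //.
Qed.
Lemma cnt_par (q : bool) n : (\sum_(i < 2 * n) (odd i == q))%N = n.
Proof.
rewrite -(big_mkord xpredT (fun i => (odd i == q) : nat)); elim: n => [|n IH]; first by rewrite big_geq.
rewrite (_ : 2 * n.+1 = (2 * n).+2)%N; last lia.
rewrite big_nat_recr // big_nat_recr //= IH oddM /=; clear IH; case: q => /=; lia.
Qed.

Definition nf (gT : finGroupType) (a b : gT) (i j : nat) : gT := a ^+ i * b ^+ j.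
Definition s3 (i : nat) : nat := (if odd i then 2 else 1)%N.

Lemma emod (gT : finGroupType) (x : gT) p u v : x ^+ p = 1 -> (u %% p = v %% p)%N -> x ^+ u = x ^+ v.
Proof. by move=> hx e; rewrite -(expg_mod u hx) e expg_mod. Qed.

Lemma bai (gT : finGroupType) (a b : gT) l i : b ^+ 3 = 1 -> a^-1 * b * a = b^-1 ->
  b ^+ l * a ^+ i = a ^+ i * b ^+ (l * s3 i).
Proof.
move=> hb hab.
have binv : b^-1 = b ^+ 2 by apply/eqP; rewrite eq_invg_mul -expgS hb.
have ba : b * a = a * b ^+ 2 by rewrite -binv -hab !mulgA mulgV mul1g.
have bla : forall l, b ^+ l * a = a * b ^+ (2 * l).
  elim=> [|k IH]; first by rewrite !expg0 mul1g mulg1.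
  by rewrite expgS -mulgA IH mulgA ba -mulgA -expgD; congr (_ * _ ^+ _); lia.
elim: i => [|i IH]; first by rewrite /s3 /= muln1 !expg0 mulg1 mul1g.
rewrite expgSr mulgA IH -mulgA bla mulgA -expgSr mulnA.
apply: congr1; apply: (@emod _ b 3 _ _ hb); rewrite /s3 /=; case: (odd i) => /=; lia.
Qed.

Lemma nfM (gT : finGroupType) (a b : gT) k l i j : b ^+ 3 = 1 -> a^-1 * b * a = b^-1 ->
  nf a b k l * nf a b i j = nf a b (k + i) (l * s3 i + j).
Proof.
move=> hb hab; by rewrite /nf -mulgA [b ^+ l * _]mulgA (bai l i hb hab) !expgD !mulgA.
Qed.

Lemma nf_surj n (gT : finGroupType) (a b : gT) : (0 < n)%N ->
  <<[set a; b]>> = [set: gT] -> a ^+ (2 * n) = 1 -> b ^+ 3 = 1 -> a^-1 * b * a = b^-1 ->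
  forall g : gT, exists i j, [/\ (i < 2 * n)%N, (j < 3)%N & g = nf a b i j].
Proof.
move=> n0 gen ha hb hab g.
have n2 : (0 < 2 * n)%N by lia.
pose X := [set g : gT | [exists i : 'I_(2*n), [exists j : 'I_3, g == nf a b i j]]].
have inX : forall i j, nf a b i j \in X.
  move=> i j; rewrite inE; apply/existsP; exists (Ordinal (ltn_pmod i n2)).
  apply/existsP; exists (Ordinal (ltn_pmod j (isT : (0 < 3)%N))); apply/eqP.
  by rewrite /nf /= (emod ha (modn_mod i (2 * n))) (emod hb (modn_mod j 3)).
have gX : group_set X.
  apply/group_setP; split; first by have := inX 0%N 0%N; rewrite /nf !expg0 mulg1.
  move=> x y; rewrite inE => /existsP[i /existsP[j /eqP ->]].
  rewrite inE => /existsP[k /existsP[l /eqP ->]].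
  by rewrite nfM.
have sub : [set a; b] \subset X.
  apply/subsetP => x /set2P[]->.
    by have := inX 1%N 0%N; rewrite /nf expg1 expg0 mulg1.
  by have := inX 0%N 1%N; rewrite /nf expg1 expg0 mul1g.
have := gen_subG [set a; b] (Group gX); rewrite sub gen => /subsetP /(_ g).
rewrite inE => /(_ isT); rewrite inE => /existsP[i /existsP[j /eqP ->]].
by exists i, j; split.
Qed.

Lemma nf_inj n (gT : finGroupType) (a b : gT) : (0 < n)%N ->
  <<[set a; b]>> = [set: gT] -> a ^+ (2 * n) = 1 -> b ^+ 3 = 1 -> a^-1 * b * a = b^-1 ->
  #|gT| = (6 * n)%N ->
  forall i j k l, (i < 2 * n)%N -> (j < 3)%N -> (k < 2 * n)%N -> (l < 3)%N ->
  nf a b i j = nf a b k l -> i = k /\ j = l.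
Proof.
move=> n0 gen ha hb hab card.
pose phi (p : 'I_(2*n) * 'I_3) := nf a b p.1 p.2.
have img : [set phi p | p in [set: 'I_(2*n) * 'I_3]] = [set: gT].
  apply/setP => g; rewrite inE; have [i [j [hi hj ->]]] := nf_surj n0 gen ha hb hab g.
  by apply/imsetP; exists (Ordinal hi, Ordinal hj).
have : {in [set: 'I_(2*n) * 'I_3] &, injective phi}.
  apply/imset_injP; rewrite img !cardsT card card_prod !card_ord; apply/eqP; lia.
move=> inj i j k l hi hj hk hl e.
have := inj (Ordinal hi, Ordinal hj) (Ordinal hk, Ordinal hl) (in_setT _) (in_setT _) e.
by case=> E1 E2.
Qed.

Definition Sset n (gT : finGroupType) (a b : gT) : {set gT} :=
  (<[a ^+ 2]> :\ 1) :|: ([set a ^+ (2 * r + 1) | r : 'I_n] :|: [set a ^+ (2 * r + 1) * b | r : 'I_n]).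

Lemma nf00 (gT : finGroupType) (a b : gT) : nf a b 0 0 = 1.
Proof. by rewrite /nf !expg0 mulg1. Qed.

Lemma inS n (gT : finGroupType) (a b : gT) : (0 < n)%N ->
  <<[set a; b]>> = [set: gT] -> a ^+ (2 * n) = 1 -> b ^+ 3 = 1 -> a^-1 * b * a = b^-1 ->
  #|gT| = (6 * n)%N ->
  forall m e, (m < 2 * n)%N -> (e < 3)%N ->
  (nf a b m e \in Sset n a b) = ((e == 0%N) && (m != 0%N)) || ((e == 1%N) && odd m).
Proof.
move=> n0 gen ha hb hab card m e hm he.
have inj := nf_inj n0 gen ha hb hab card.
have n2 : (0 < 2 * n)%N by lia.
have apow : forall p, a ^+ p = nf a b (p %% (2 * n)) 0.
  by move=> p; rewrite /nf expg0 mulg1 (emod ha (modn_mod p (2 * n))).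
have hm2 := odd_double_half m; rewrite -muln2 in hm2.
apply/idP/idP.
  rewrite !inE => /orP [/andP[ne1 /cycleP[r E]] | /orP[/imsetP[r _ E] | /imsetP[r _ E]]].
  - rewrite -expgM apow in E; have [em ee] := inj m e _ 0%N hm he (ltn_pmod _ n2) isT E.
    subst e; rewrite eqxx /= orbF; apply/eqP => m0; move: ne1; by rewrite m0 nf00 eqxx.
  - rewrite apow in E; have [em ee] := inj m e _ 0%N hm he (ltn_pmod _ n2) isT E.
    subst e; rewrite eqxx /= em modn_small //; have := ltn_ord r; lia.
  - have E' : nf a b m e = nf a b (2 * r + 1) 1 by rewrite E /nf expg1.
    have hr : (2 * r + 1 < 2 * n)%N by have := ltn_ord r; lia.
    have [em ee] := inj m e (2 * r + 1)%N 1%N hm he hr isT E'.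
    by subst e m; rewrite /= oddD oddM.
case/orP => [/andP[/eqP ee m0] | /andP[/eqP ee om]]; subst e.
  case: (boolP (odd m)) => om.
    rewrite !inE; apply/orP; right; apply/orP; left; apply/imsetP.
    have hr : (m./2 < n)%N by move: hm2; rewrite om; lia.
    exists (Ordinal hr) => //; rewrite /nf expg0 mulg1 /=; congr (_ ^+ _); move: hm2; rewrite om; lia.
  rewrite !inE; apply/orP; left; apply/andP; split.
    apply/eqP => E; rewrite -(nf00 a b) in E; have [em _] := inj m 0%N 0%N 0%N hm isT n2 isT E.
    by rewrite em in m0.
  apply/cycleP; exists (m./2); rewrite -expgM /nf expg0 mulg1; congr (_ ^+ _).
  by move: hm2; rewrite (negbTE om); lia.
rewrite !inE; apply/orP; right; apply/orP; right; apply/imsetP.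
have hr : (m./2 < n)%N by move: hm2; rewrite om; lia.
exists (Ordinal hr) => //; rewrite /nf expg1 /=; congr (_ ^+ _ * _); move: hm2; rewrite om; lia.
Qed.

Definition cls n (gT : finGroupType) (a b : gT) (g : gT) : 'I_6 :=
  if [pick p : 'I_(2 * n) * 'I_3 | nf a b p.1 p.2 == g] is Some p then pos (odd p.1) p.2 else ord0.

Lemma clsE n (gT : finGroupType) (a b : gT) : (0 < n)%N ->
  <<[set a; b]>> = [set: gT] -> a ^+ (2 * n) = 1 -> b ^+ 3 = 1 -> a^-1 * b * a = b^-1 ->
  #|gT| = (6 * n)%N ->
  forall i j, (i < 2 * n)%N -> (j < 3)%N -> cls n a b (nf a b i j) = pos (odd i) j.
Proof.
move=> n0 gen ha hb hab card i j hi hj; rewrite /cls.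
case: pickP => [p /eqP e | /(_ (Ordinal hi, Ordinal hj))]; last by rewrite eqxx.
by have [-> ->] := nf_inj n0 gen ha hb hab card (ltn_ord p.1) (ltn_ord p.2) hi hj e.
Qed.

Lemma adjE n (gT : finGroupType) (a b : gT) : (0 < n)%N ->
  <<[set a; b]>> = [set: gT] -> a ^+ (2 * n) = 1 -> b ^+ 3 = 1 -> a^-1 * b * a = b^-1 ->
  #|gT| = (6 * n)%N ->
  forall g h : gT, (h * g^-1 \in Sset n a b) = Mb (cls n a b g) (cls n a b h) && (g != h).
Proof.
move=> n0 gen ha hb hab card g h.
have surj := nf_surj n0 gen ha hb hab; have inj := nf_inj n0 gen ha hb hab card.
have n2 : (0 < 2 * n)%N by lia.
have [i [j [hi hj ->]]] := surj g; have [k [l [hk hl ->]]] := surj h.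
have [m [e [hm he E]]] := surj (nf a b k l * (nf a b i j)^-1).
rewrite E inS // !(clsE n0 gen ha hb hab card) //.
have E2 : nf a b k l = nf a b m e * nf a b i j by rewrite -E mulgKV.
rewrite nfM // /nf (emod ha (esym (modn_mod (m + i) (2 * n)))) (emod hb (esym (modn_mod (e * s3 i + j) 3))) in E2.
have [ek el] := inj _ _ _ _ hk hl (ltn_pmod _ n2) (ltn_pmod _ (isT : (0 < 3)%N)) E2.
have -> : (nf a b i j != nf a b k l) = ~~ ((m == 0%N) && (e == 0%N)).
  rewrite eq_sym eq_mulgV1 E; congr (~~ _).
  apply/eqP/andP => [E1 | [/eqP -> /eqP ->]]; last exact: nf00.
  rewrite -(nf00 a b) in E1; have [-> ->] := inj m e 0%N 0%N hm he n2 isT E1; by [].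
rewrite ek el odd_mod; last by rewrite oddM.
rewrite oddD /s3; apply: fcheck => //; by move/eqP->.
Qed.

Lemma cls_count n (gT : finGroupType) (a b : gT) : (0 < n)%N ->
  <<[set a; b]>> = [set: gT] -> a ^+ (2 * n) = 1 -> b ^+ 3 = 1 -> a^-1 * b * a = b^-1 ->
  #|gT| = (6 * n)%N ->
  forall c : 'I_6, (\sum_(i < #|gT|) (cls n a b (enum_val i) == c))%N = n.
Proof.
move=> n0 gen ha hb hab card c.
have inj := nf_inj n0 gen ha hb hab card.
pose phi (p : 'I_(2*n) * 'I_3) := nf a b p.1 p.2.
have bphi : bijective phi.
  apply: inj_card_bij; last by rewrite card card_prod !card_ord; lia.
  move=> [p1 p2] [q1 q2]; rewrite /phi /= => E.
  have [e1 e2] := inj _ _ _ _ (ltn_ord p1) (ltn_ord p2) (ltn_ord q1) (ltn_ord q2) E.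
  by congr (_, _); apply: val_inj.
have -> : (\sum_(i < #|gT|) (cls n a b (enum_val i) == c))%N = (\sum_(g : gT) (cls n a b g == c))%N.
  by rewrite (reindex _ (onW_bij _ (enum_val_bij gT))).
rewrite (reindex phi (onW_bij _ bphi)) /=.
rewrite -(pair_bigA _ (fun i j => (cls n a b (phi (i, j)) == c) : nat)) /=.
under eq_bigr => i _ do (under eq_bigr => j _ do rewrite /phi /= (clsE n0 gen ha hb hab card (ltn_ord i) (ltn_ord j)); rewrite inner).
by rewrite cnt_par.
Qed.

Lemma conn n (gT : finGroupType) (a b : gT) : (0 < n)%N ->
  <<[set a; b]>> = [set: gT] -> a ^+ (2 * n) = 1 -> b ^+ 3 = 1 -> a^-1 * b * a = b^-1 ->
  #|gT| = (6 * n)%N ->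
  forall g h : gT, connect (cay_rel (Sset n a b)) g h.
Proof.
move=> n0 gen ha hb hab card.
set e := cay_rel (Sset n a b).
have tr : forall k x y, connect e x y -> connect e (x * k) (y * k).
  move=> k x y /connectP[p pth ->]; apply/connectP; exists (map (fun z => z * k) p); last by rewrite (last_map (fun z => z * k)).
  elim: p x pth => [|z p IH] x //= /andP[exz pth]; rewrite IH // andbT.
  by move: exz; rewrite /e /cay_rel invMg mulgA mulgK.
pose X := [set x | connect e 1 x].
have gX : group_set X.
  apply/group_setP; split; first by rewrite inE connect0.
  move=> x y; rewrite !inE => cx cy; apply: connect_trans cy _.
  by have := tr y 1 x cx; rewrite mul1g.
have n2 : (1 < 2 * n)%N by lia.
have inS' := inS n0 gen ha hb hab card.
have sub : [set a; b] \subset X.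
  apply/subsetP => x /set2P[]->; rewrite inE.
    apply: connect1; rewrite /e /cay_rel invg1 mulg1.
    by have := inS' 1%N 0%N n2 isT; rewrite /nf expg1 expg0 mulg1 => ->.
  have c1 : connect e 1 (a * b).
    apply: connect1; rewrite /e /cay_rel invg1 mulg1.
    by have := inS' 1%N 1%N n2 isT; rewrite /nf !expg1 => ->.
  apply: connect_trans c1 _; apply: connect1; rewrite /e /cay_rel invMg mulgA mulgV mul1g.
  have -> : a^-1 = a ^+ (2 * n).-1.
    apply/eqP; rewrite eq_invg_mul -expgS prednK ?ha //; lia.
  have := inS' (2 * n).-1 0%N _ isT; rewrite /nf expg0 mulg1 => ->; last lia.
  by apply/orP; left; apply/andP; split => //; apply/eqP; lia.
have := gen_subG [set a; b] (Group gX); rewrite sub gen => /subsetP XT g h.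
have := XT (h * g^-1) (in_setT _); rewrite inE => /(tr g).
by rewrite mul1g mulgKV.
Qed.

Local Close Scope group_scope.
Local Open Scope ring_scope.
Definition Vl : seq (seq int) := [:: [:: 1;1;1;1;1;1]; [:: 1;-1;1;-1;1;-1]; [:: 2;1;-1;-2;-1;1];
  [:: 0;1;1;0;-1;-1]; [:: 2;-1;-1;2;-1;-1]; [:: 0;1;-1;0;1;-1]].
Definition V6 : 'M[int]_6 := \matrix_(i,j) nth 0 (nth [::] Vl i) j.
Definition M6 : 'M[int]_6 := \matrix_(i,j) (Mb i j : int).
Definition dl : seq int := [:: 3;-1;2;2;0;0].
Definition D6 : 'M[int]_6 := diag_mx (\row_i nth 0 dl i).
Definition N6 : 'M[int]_6 := diag_mx (\row_i nth 0 [:: 6;6;12;4;12;4] i).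
Lemma VM : V6 *m M6 = D6 *m V6.
Proof. apply/matrixP => i j; rewrite !mxE !big_ord_recl !big_ord0 !mxE.
by case: i => -[|[|[|[|[|[|i]]]]]] Hi //; case: j => -[|[|[|[|[|[|j]]]]]] Hj.
Qed.
Lemma VV : V6 *m V6^T = N6.
Proof. apply/matrixP => i j; rewrite !mxE !big_ord_recl !big_ord0 !mxE.
by case: i => -[|[|[|[|[|[|i]]]]]] Hi //; case: j => -[|[|[|[|[|[|j]]]]]] Hj.
Qed.
Lemma detV6 : \det V6 != 0.
Proof.
have := congr1 determinant VV; rewrite det_mulmx det_tr det_diag.
rewrite !big_ord_recl big_ord0 !mxE /= => E.
by apply/eqP => E0; move: E; rewrite E0.
Qed.

Notation pint := (intr : int -> {poly algC}).
Lemma pintC (z : int) : (z%:~R : {poly algC}) = (z%:~R : algC)%:P.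
Proof. by rewrite rmorph_int. Qed.

Lemma det6 (t c : {poly algC}) :
  \det (t%:M - c *: map_mx pint M6) = (t - c *+ 3) * (t + c) * (t - c *+ 2) ^+ 2 * t ^+ 2.
Proof.
pose V := map_mx pint V6; pose D := map_mx pint D6.
have VMp : V *m map_mx pint M6 = D *m V.
  by rewrite /V /D -!map_mxM VM.
have dV : \det V != 0.
  rewrite /V det_map_mx /= pintC polyC_eq0 intr_eq0; exact: detV6.
have E : V *m (t%:M - c *: map_mx pint M6) = (t%:M - c *: D) *m V.
  by rewrite mulmxBr mulmxBl -scalemxAr VMp scalemxAl mul_mx_scalar mul_scalar_mx.
have := congr1 determinant E; rewrite !det_mulmx mulrC => /(mulIf dV) ->.
have -> : t%:M - c *: D = diag_mx (\row_i (t - c * pint (nth 0 dl i))).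
  apply/matrixP => i j; rewrite !mxE; case: (i == j); rewrite /= ?mulr1n ?mulr0n ?subr0 //.
  by rewrite mulr0 subr0.
rewrite det_diag !big_ord_recl big_ord0 !mxE /=.
rewrite !mulr0 !subr0 mulr1; ring.
Qed.

Lemma sylv (R : idomainType) m k (t : R) (U : 'M[R]_(m,k)) (W : 'M[R]_(k,m)) :
  (k <= m)%N -> t != 0 ->
  \det (t%:M - U *m W) = t ^+ (m - k) * \det (t%:M - W *m U).
Proof.
move=> km t0.
pose B := block_mx (t%:M : 'M_m) U W (1%:M : 'M_k).
have E1 : block_mx 1%:M (-U) 0 1%:M *m B = block_mx (t%:M - U *m W) 0 W 1%:M.
  rewrite mulmx_block !mul_scalar_mx !scale1r !mul0mx !add0r mul_mx_scalar scale1r.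
  by rewrite mulNmx addrN.
have E2 : B *m block_mx 1%:M (-U) 0 (t%:M) = block_mx (t%:M) 0 W (t%:M - W *m U).
  rewrite mulmx_block !mulmx0 !addr0 mulmxN !mul_scalar_mx !mul_mx_scalar !scale1r.
  by rewrite addNr mulmxN addrC scalemx1.
have d1 : \det B = \det (t%:M - U *m W).
  move: (congr1 determinant E1); rewrite det_mulmx det_ublock !det1 mul1r det_lblock det1 mulr1 mul1r; apply.
have d2 : \det B * t ^+ k = t ^+ m * \det (t%:M - W *m U).
  move: (congr1 determinant E2); rewrite det_mulmx det_ublock !det1 mul1r det_lblock !det_scalar; apply.
apply: (mulIf (expf_neq0 k t0)); rewrite -d1 d2 -mulrA [_ * t ^+ k]mulrC mulrA -exprD subnK //.
Qed.

Lemma sumd (R : pzRingType) (x : 'I_6) (F : 'I_6 -> R) : \sum_c (x == c)%:R * F c = F x.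
Proof.
rewrite (bigD1 x) //= eqxx mul1r big1 ?addr0 // => c; rewrite eq_sym => /negbTE ->; exact: mul0r.
Qed.
Lemma sumd' (R : pzRingType) (x : 'I_6) (F : 'I_6 -> R) : \sum_c F c * (x == c)%:R = F x.
Proof.
rewrite (bigD1 x) //= eqxx mulr1 big1 ?addr0 // => c; rewrite eq_sym => /negbTE ->; exact: mulr0.
Qed.

Lemma charA (N n : nat) (cls : 'I_N -> 'I_6) (A : 'M[algC]_N) :
  (6 <= N)%N ->
  (forall c, (\sum_(i < N) (cls i == c))%N = n) ->
  (forall i j, A i j = (Mb (cls i) (cls j))%:R - (i == j)%:R) ->
  char_poly A = ('X + 1) ^+ (N - 6) *
   ((('X + 1) - (n%:R : {poly algC}) *+ 3) * (('X + 1) + n%:R) * (('X + 1) - n%:R *+ 2) ^+ 2 * ('X + 1) ^+ 2).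
Proof.
move=> N6 hcnt hA.
set t : {poly algC} := 'X + 1.
pose Cp : 'M[{poly algC}]_(N,6) := \matrix_(i,c) (cls i == c)%:R.
pose Mp : 'M[{poly algC}]_6 := map_mx pint M6.
have t0 : t != 0.
  apply/eqP => /(congr1 (horner^~ 0)); rewrite /t !hornerE => /eqP; by rewrite oner_eq0.
have key : char_poly_mx A = t%:M - (Cp *m Mp) *m Cp^T.
  apply/matrixP => i j; rewrite !mxE.
  under eq_bigr => d _ do rewrite !mxE.
  under eq_bigr => d _ do (under eq_bigr => c _ do rewrite !mxE).
  under eq_bigr => d _ do rewrite sumd.
  rewrite sumd' hA /t.
  case: (i == j); case: (Mb _ _); rewrite /= ?mulr1n ?mulr0n.
  all: rewrite ?subr0 ?sub0r ?rmorphB ?rmorphN ?polyC1 ?polyC0 ?subr0 /=.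
  - by rewrite subrr subr0 addrK.
  - by rewrite opprK polyC1.
  - by [].
  - by [].
have CC : Cp^T *m Cp = (n%:R : {poly algC})%:M.
  apply/matrixP => c d; rewrite !mxE.
  under eq_bigr => i _ do rewrite !mxE -natrM.
  rewrite -natr_sum; case: (eqVneq c d) => [ecd|ne].
    subst d.
    under eq_bigr => i _ do rewrite mulnb andbb.
    by rewrite hcnt mulr1n.
  rewrite mulr0n big1 // => i _.
  by case: (cls i =P c) => [->|]; rewrite ?(negbTE ne) ?muln0 ?mul0n.
rewrite /char_poly key sylv // mulmxA CC mul_scalar_mx det6.
by [].
Qed.

Lemma polyid (n k : nat) :
  ('X + 1) ^+ k * ((('X + 1) - (n%:R : {poly algC}) *+ 3) * (('X + 1) + n%:R) * (('X + 1) - n%:R *+ 2) ^+ 2 * ('X + 1) ^+ 2)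
  = ('X - (- (n%:Z + 1))%:~R%:P)
    * ('X - (-1)%:~R%:P) ^+ (k + 2)
    * ('X - (2 * n%:Z - 1)%:~R%:P) ^+ 2
    * ('X - (3 * n%:Z - 1)%:~R%:P).
Proof.
have -> : ('X - (-1)%:~R%:P) = ('X + 1 : {poly algC}) by ring.
rewrite exprD; move: (('X + 1) ^+ k) => Q; ring.
Qed.

Lemma Mbcc (c : 'I_6) : Mb c c.
Proof. by rewrite /Mb addKn modnn. Qed.

Unset Implicit Arguments.

Theorem corollary4p2 (n : nat) (gT : finGroupType) (a b : gT) :
  (1 < n)%N ->
  (* gT is the group U_{6n} = < a, b | a^{2n} = b^3 = 1, a^-1 b a = b^-1 > *)
  (<<[set a; b]>> = [set: gT])%g ->
  (a ^+ (2 * n) = 1)%g -> (b ^+ 3 = 1)%g -> (a^-1 * b * a = b^-1)%g ->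
  #|gT| = (6 * n)%N ->
  let S1 : {set gT} := (<[a ^+ 2]> :\ 1)%g in
  let S2 : {set gT} := ([set (a ^+ (2 * r + 1))%g | r : 'I_n]
                        :|: [set (a ^+ (2 * r + 1) * b)%g | r : 'I_n]) in
  let S := S1 :|: S2 in
  cay_connected S /\ integral_mx (cay_adj S) /\
  char_poly (cay_adj S) =
    ('X - (- (n%:Z + 1))%:~R%:P)
    * ('X - (-1)%:~R%:P) ^+ (6 * n - 4)
    * ('X - (2 * n%:Z - 1)%:~R%:P) ^+ 2
    * ('X - (3 * n%:Z - 1)%:~R%:P).
Proof.
move=> n1 gen ha hb hab card S1 S2 S.
have n0 : (0 < n)%N by lia.
have SE : S = Sset n a b by [].
rewrite SE.
have hA : forall i j, cay_adj (Sset n a b) i j =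
    (Mb (cls n a b (enum_val i)) (cls n a b (enum_val j)))%:R - (i == j)%:R.
  move=> i j; rewrite /cay_adj mxE /cay_rel (adjE n0 gen ha hb hab card).
  rewrite (inj_eq (bij_inj (enum_val_bij gT))).
  case: eqP => [<-|_]; first by rewrite Mbcc subrr.
  by rewrite andbT subr0.
have hchar : char_poly (cay_adj (Sset n a b)) =
    ('X - (- (n%:Z + 1))%:~R%:P)
    * ('X - (-1)%:~R%:P) ^+ (6 * n - 4)
    * ('X - (2 * n%:Z - 1)%:~R%:P) ^+ 2
    * ('X - (3 * n%:Z - 1)%:~R%:P).
  rewrite (charA _ (cls_count n0 gen ha hb hab card) hA); last by rewrite card; lia.
  rewrite card (_ : (6 * n - 4 = (6 * n - 6) + 2)%N); last lia.
  exact: polyid.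
split; first exact: (conn n0 gen ha hb hab card).
split; last exact: hchar.
have key : forall (l : algC) (z : int), l == z%:~R -> l \is a Num.int.
  by move=> l z /eqP ->; exact: intr_int.
move=> l; rewrite eigenvalue_root_char hchar !rootM.
rewrite (_ : (6 * n - 4 = (6 * n - 5).+1)%N); last lia.
rewrite root_exp_XsubC !root_XsubC => H.
repeat (case/orP: H => H).
all: exact: key H.
Qed.
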